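(* For every integer $m\ge0$, $$A_{2m+1}(0,-1)=(-1)^m\frac{E_{2m+1}}{2^m},\qquad A_{2m+2}(0,-1)=(-1)^m\frac{E_{2m+3}}{2^{m+1}}.$$
   Context: For a permutation $\pi=a_1\cdots a_n$ of $[n]$, an index $i\in[n-1]$ is a descent if $a_i>a_{i+1}$; $\mathrm{odes}(\pi)$ and $\mathrm{edes}(\pi)$ count descents at odd and even positions. $A_n(p,q)=\sum_{\pi\in\mathfrak S_n}p^{\mathrm{odes}(\pi)}q^{\mathrm{edes}(\pi)}$. $E_n$ is the Euler number, the number of alternating permutations $a_1>a_2<a_3>\cdots$ in $\mathfrak S_n$; $\sum_{n\ge0}E_nt^n/n!=\tan t+\sec t$. *)

(* Defs.v *)
From HB Require Import structures.
From mathcomp Require Import all_boot all_order all_algebra all_fingroup.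
Set Implicit Arguments. Unset Strict Implicit. Unset Printing Implicit Defensive.
Import GRing.Theory.

(* One-line notation of a permutation s of {0,..,n-1}: the word a_1 ... a_n,
   stored 0-based: a_(i+1) = nth 0 (pword s) i (values in 0..n-1). *)
Definition pword n (s : 'S_n) : seq nat := [seq val (s i) | i <- enum 'I_n].

(* i (1-based, 1 <= i <= n-1) is a descent iff a_i > a_(i+1). *)
Definition is_descent n (s : 'S_n) (i : nat) : bool :=
  nth 0 (pword s) i.-1 > nth 0 (pword s) i.

Definition odes n (s : 'S_n) : nat :=
  count (fun i => odd i && is_descent s i) (iota 1 n.-1).
Definition edes n (s : 'S_n) : nat :=
  count (fun i => ~~ odd i && is_descent s i) (iota 1 n.-1).

Definition Apq (R : comNzRingType) (n : nat) (p q : R) : R :=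
  \sum_(s : 'S_n) p ^+ odes s * q ^+ edes s.

Definition alternating n (s : 'S_n) : bool :=
  all (fun i => if odd i then is_descent s i else ~~ is_descent s i) (iota 1 n.-1).

Definition Euler (n : nat) : nat := #|[set s : 'S_n | alternating s]|.

(* Main.v *)
Require Import Defs.
From HB Require Import structures.
From mathcomp Require Import all_boot all_order all_algebra all_fingroup.
From mathcomp Require Import zify ring lra.
Import GRing.Theory Num.Theory.
Local Open Scope ring_scope.

Definition Wt (w : nat -> bool -> rat) n (s : 'S_n) : rat :=
  \prod_(i <- iota 1 n.-1) w i (is_descent s i).
Arguments Wt w {n} s.

Lemma pword_nth n (s : 'S_n) i (Hi : (i < n)%N) : nth 0%N (pword s) i = s (Ordinal Hi).
Proof.
rewrite /pword (nth_map (Ordinal Hi)) ?size_enum_ord //.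
by congr (val (s _)); apply: val_inj => /=; rewrite nth_enum_ord.
Qed.

Section Lift.
Variables (n : nat) (j : 'I_n.+2) (s : 'S_n.+1).
Let t := lift_perm ord_max j s.

Lemma tval i (Hi : (i < n.+1)%N) (Hi' : (i < n.+2)%N) :
  t (Ordinal Hi') = lift j (s (Ordinal Hi)).
Proof.
have -> : Ordinal Hi' = lift ord_max (Ordinal Hi) by apply: val_inj; rewrite /= /bump; case: leqP => /= *; lia.
by rewrite lift_perm_lift.
Qed.

Lemma bump_lt (a b : nat) : (bump j a < bump j b)%N = (a < b)%N.
Proof. rewrite /bump; case: (leqP j a); case: (leqP j b) => /= *; lia. Qed.

Lemma desc_lift i : (1 <= i <= n)%N -> is_descent t i = is_descent s i.
Proof.
move=> /andP[H1 H2].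
have Ha : (i.-1 < n.+1)%N by lia.
have Hb : (i < n.+1)%N by lia.
have Ha' : (i.-1 < n.+2)%N by lia.
have Hb' : (i < n.+2)%N by lia.
rewrite /is_descent !pword_nth (tval _ Ha Ha') (tval _ Hb Hb') /=.
by rewrite bump_lt.
Qed.

Lemma desc_last : is_descent t n.+1 = (j <= s ord_max)%N.
Proof.
have Ha : (n < n.+1)%N by lia.
have Ha' : (n < n.+2)%N by lia.
have E : forall H, t (Ordinal (n:=n.+2) (m:=n.+1) H) = j.
  by move=> H; rewrite (_ : Ordinal H = ord_max) ?lift_perm_id //; apply: val_inj.
rewrite /is_descent !pword_nth /= E (tval _ Ha Ha').
have -> : Ordinal Ha = ord_max by apply: val_inj.
rewrite /= /bump; case: (leqP j (s ord_max)) => /= *; lia.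
Qed.

Lemma Wt_lift w : Wt w t = Wt w s * w n.+1 (j <= s ord_max)%N.
Proof.
rewrite /Wt (_ : n.+2.-1 = n + 1)%N; last by rewrite addn1.
rewrite iotaD big_cat add1n [iota _ 1]/= big_seq1 desc_last.
congr (_ * _); rewrite big_seq [RHS]big_seq; apply: eq_bigr => i.
by rewrite mem_iota => Hi; rewrite desc_lift //; lia.
Qed.
End Lift.

Fixpoint rowf (w : nat -> bool -> rat) n : nat -> rat :=
  if n is n'.+1 then fun j => \sum_(k < n) rowf w n' k * w n (j <= k)%N
  else fun _ => 1.

Lemma lift_bij n : bijective (fun p : 'I_n.+2 * 'S_n.+1 => lift_perm ord_max p.1 p.2).
Proof.
apply: inj_card_bij.
  move=> [k1 s1] [k2 s2] /= E.
  have Ek : k1 = k2 by rewrite -(lift_perm_id ord_max k1 s1) E lift_perm_id.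
  subst k2; congr pair; apply/permP => i.
  apply: (@lift_inj _ k1).
  by rewrite -!(lift_perm_lift ord_max) E.
by rewrite card_prod !card_Sn card_ord factS.
Qed.

Lemma row_sum w n (j : 'I_n.+1) :
  \sum_(t : 'S_n.+1 | t ord_max == j) Wt w t = rowf w n j.
Proof.
elim: n j => [|n IH] j.
  rewrite (eq_bigl (fun _ => true)); last first.
    by move=> t; apply/eqP; apply: val_inj; rewrite /=; case: (t ord_max) => [[]]; case: j => [[]].
  rewrite /= (eq_bigr (fun _ => 1)); last by move=> *; rewrite /Wt big_nil.
  by rewrite sumr_const card_Sn.
rewrite (reindex _ (onW_bij _ (lift_bij n))) /=.
rewrite (eq_bigl (fun p => (p.1 == j) && xpredT p.2)); last by move=> p; rewrite lift_perm_id andbT.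
rewrite -(pair_big (fun k => k == j) xpredT (fun k s => Wt w (lift_perm ord_max k s))) /=.
rewrite big_pred1_eq.
under eq_bigr do rewrite Wt_lift.
rewrite (partition_big (fun s : 'S_n.+1 => s ord_max) xpredT) //=.
apply: eq_bigr => k _.
rewrite -IH big_distrl /=; apply: eq_bigr => s /eqP ->.
done.
Qed.

Lemma total_sum w n : \sum_(t : 'S_n.+1) Wt w t = \sum_(k < n.+1) rowf w n k.
Proof.
rewrite (partition_big (fun s : 'S_n.+1 => s ord_max) xpredT) //=.
by apply: eq_bigr => k _; rewrite row_sum.
Qed.
Section Rows.
Variable w : nat -> bool -> rat.
Definition alp q := w q false - w q true.
Definition bet q := w q true.
Definition Tw n := \sum_(k < n.+1) rowf w n k.
Definition kap a b := \prod_(a <= q < b) alp q.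

Lemma rowS n j : (j <= n.+1)%N ->
  rowf w n.+1 j = alp n.+1 * \sum_(k < j) rowf w n k + bet n.+1 * Tw n.
Proof.
move=> Hj; rewrite /= /Tw /alp /bet.
rewrite -(big_mkord xpredT (fun k => rowf w n k * w n.+1 (j <= k)%N)).
rewrite -!(big_mkord xpredT (rowf w n)).
rewrite (big_cat_nat (leq0n j) Hj) /= [X in _ = _ + _ * X](big_cat_nat (leq0n j) Hj) /=.
rewrite big_nat_cond [X in _ + X = _]big_nat_cond.
rewrite (eq_bigr (fun k => rowf w n k * w n.+1 false)); last first.
  by move=> k /andP[/andP[_ Hk] _]; rewrite leqNgt Hk.
rewrite [X in _ + X = _](eq_bigr (fun k => rowf w n k * w n.+1 true)); last first.
  by move=> k /andP[/andP[Hk _] _]; rewrite Hk.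
rewrite -!big_distrl /= -!big_nat_cond; ring.
Qed.

Lemma hockey j r : \sum_(k < j) ('C(k, r)%:R : rat) = 'C(j, r.+1)%:R.
Proof.
elim: j => [|j IH]; first by rewrite big_ord0 bin0n.
by rewrite big_ord_recr /= IH binS natrD addrC.
Qed.

Lemma row_closed n j : (j <= n)%N -> rowf w n j =
  kap 1 n.+1 * 'C(j, n)%:R +
  \sum_(1 <= p < n.+1) bet p * Tw p.-1 * kap p.+1 n.+1 * 'C(j, n - p)%:R.
Proof.
elim: n j => [|n IH] j Hj.
  by rewrite /kap !big_geq //= bin0 mulr1 addr0.
rewrite rowS //.
rewrite (eq_bigr (fun k : 'I_j => kap 1 n.+1 * 'C(k, n)%:R +
  \sum_(1 <= p < n.+1) bet p * Tw p.-1 * kap p.+1 n.+1 * 'C(k, n - p)%:R)); last first.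
  by move=> k _; rewrite IH //; have := ltn_ord k; lia.
rewrite big_split /= -mulr_sumr hockey exchange_big /=.
rewrite (eq_bigr (fun p => bet p * Tw p.-1 * kap p.+1 n.+1 * 'C(j, (n - p).+1)%:R)); last first.
  by move=> p _; rewrite -mulr_sumr hockey.
rewrite [in RHS]big_nat_recr //= subnn bin0 mulr1.
rewrite /kap [\prod_(1 <= q < n.+2) _]big_nat_recr //= [\prod_(n.+2 <= q < n.+2) _]big_geq //.
rewrite mulr1 mulrDr mulr_sumr addrA; congr (_ + _).
rewrite mulrA [_ * alp _]mulrC -mulrA; congr (_ + _).
rewrite !big_nat; apply: eq_bigr => p /andP[H1 H2].
rewrite (big_nat_recr _ _ _ (_ : p.+1 <= n.+1)%N) //=.
rewrite (_ : (n.+1 - p = (n - p).+1)%N); last by lia.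
ring.
Qed.

Lemma T_rec n : Tw n =
  kap 1 n.+1 + \sum_(1 <= p < n.+1) bet p * Tw p.-1 * kap p.+1 n.+1 * 'C(n.+1, p)%:R.
Proof.
rewrite {1}/Tw (eq_bigr (fun j : 'I_n.+1 => kap 1 n.+1 * 'C(j, n)%:R +
  \sum_(1 <= p < n.+1) bet p * Tw p.-1 * kap p.+1 n.+1 * 'C(j, n - p)%:R)); last first.
  by move=> j _; rewrite row_closed // -ltnS.
rewrite big_split /= -mulr_sumr hockey binn mulr1 exchange_big /=; congr (_ + _).
rewrite !big_nat; apply: eq_bigr => p /andP[H1 H2].
rewrite -mulr_sumr hockey -bin_sub; last by lia.
by rewrite (_ : (n.+1 - (n - p).+1 = p)%N) //; lia.
Qed.
End Rows.
Lemma big_pair (R : Type) (idx : R) (op : Monoid.law idx) (F : nat -> R) a d :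
  \big[op/idx]_(a <= q < a + d.*2) F q =
  \big[op/idx]_(i < d) op (F (a + i.*2)%N) (F (a + i.*2).+1).
Proof.
elim: d => [|d IH]; first by rewrite addn0 big_geq // big_ord0.
rewrite doubleS !addnS big_nat_recr; last by lia.
rewrite big_nat_recr; last by lia.
by rewrite IH big_ord_recr /= Monoid.mulmA.
Qed.

Lemma sum_pair (F : nat -> rat) a d :
  \sum_(a <= q < a + d.*2) F q = \sum_(i < d) (F (a + i.*2)%N + F (a + i.*2).+1).
Proof. exact: (@big_pair _ 0 +%R). Qed.
Lemma prod_pair (F : nat -> rat) a d :
  \prod_(a <= q < a + d.*2) F q = \prod_(i < d) (F (a + i.*2)%N * F (a + i.*2).+1).
Proof. exact: (@big_pair _ 1 *%R). Qed.

Definition wA (i : nat) (d : bool) : rat :=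
  if odd i then (if d then 0 else 1) else (if d then -1 else 1).
Definition wE (i : nat) (d : bool) : rat :=
  if odd i then (if d then 1 else 0) else (if d then 0 else 1).

Lemma kap_pair w a d c : (forall x, alp w x * alp w x.+1 = c) ->
  kap w a (a + d.*2) = c ^+ d.
Proof.
rewrite /kap prod_pair => H.
by rewrite (eq_bigr (fun _ => c)) ?prodr_const ?card_ord // => i _; apply: H.
Qed.

Lemma kap_recr w a b : (a <= b)%N -> kap w a b.+1 = kap w a b * alp w b.
Proof. by move=> H; rewrite /kap big_nat_recr. Qed.

Lemma alpA x : alp wA x = if odd x then 1 else 2.
Proof. by rewrite /alp /wA; case: (odd x) => /=; ring. Qed.
Lemma betA x : bet wA x = if odd x then 0 else -1.
Proof. by rewrite /bet /wA; case: (odd x). Qed.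
Lemma alpE x : alp wE x = if odd x then -1 else 1.
Proof. by rewrite /alp /wE; case: (odd x) => /=; ring. Qed.
Lemma betE x : bet wE x = if odd x then 1 else 0.
Proof. by rewrite /bet /wE; case: (odd x). Qed.

Lemma kapA a d : kap wA a (a + d.*2) = 2 ^+ d.
Proof. by apply: kap_pair => x; rewrite !alpA /=; case: (odd x) => /=; ring. Qed.
Lemma kapE a d : kap wE a (a + d.*2) = (-1) ^+ d.
Proof. by apply: kap_pair => x; rewrite !alpE /=; case: (odd x) => /=; ring. Qed.

Lemma pow_count (p q : rat) (P : nat -> bool) l :
  p ^+ count (fun i => odd i && P i) l * q ^+ count (fun i => ~~ odd i && P i) l =
  \prod_(i <- l) (if odd i then (if P i then p else 1) else (if P i then q else 1)).
Proof.
elim: l => [|x l IH]; first by rewrite big_nil /= mulr1.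
rewrite big_cons /= -IH !exprD.
by case: (odd x); case: (P x) => /=; rewrite ?expr0 ?expr1; ring.
Qed.

Lemma Apq_T n : Apq (n.+1) (0 : rat) (-1) = Tw wA n.
Proof.
rewrite /Apq /Tw -total_sum; apply: eq_bigr => s _.
by rewrite /odes /edes pow_count /Wt /wA.
Qed.

Lemma all_prod (f : nat -> bool) l :
  ((all (fun i => if odd i then f i else ~~ f i) l)%:R : rat) =
  \prod_(i <- l) wE i (f i).
Proof.
elim: l => [|x l IH]; first by rewrite big_nil.
rewrite big_cons /= -IH /wE.
by case: (odd x); case: (f x) => /=; rewrite ?mul0r ?mul1r.
Qed.

Lemma Euler_T n : ((Euler n.+1)%:R : rat) = Tw wE n.
Proof.
rewrite /Euler /Tw -total_sum cardsE -sum1_card natr_sum big_mkcond /=.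
apply: eq_bigr => s _.
by rewrite /Wt -all_prod unfold_in /=; case: (all _ _).
Qed.

Lemma sgn2 a b : ((-1 : rat) ^+ (a + b.*2)) = (-1) ^+ a.
Proof. by rewrite exprD -mul2n exprM sqrrN !expr1n mulr1. Qed.

Lemma sgnA i k : (-1) ^+ (i.+1 + k) * (-1) ^+ k = - (-1) ^+ i :> rat.
Proof.
rewrite exprD -mulrA -exprD addnn -(add0n k.*2) sgn2 expr0 mulr1.
by rewrite exprS mulN1r.
Qed.

Lemma E_rec m :
  \sum_(i < m.+1) 'C(m.*2.+1, i.*2.+1)%:R * ((-1) ^+ i * Tw wE i.*2) = 1.
Proof.
have H := T_rec wE m.*2.
rewrite (_ : m.*2.+1 = 1 + m.*2)%N // kapE sum_pair !add1n in H.
have s2 : (-1) ^+ m * (-1) ^+ m = 1 :> rat.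
  by rewrite -expr2 -exprM mulnC exprM sqrrN !expr1n.
rewrite big_ord_recr /= binn mul1r H mulrDr s2 mulr_sumr addrCA -big_split /=.
rewrite big1 ?addr0 // => i _.
have Hi := ltn_ord i.
have Hk : kap wE i.*2.+2 m.*2.+1 = (-1) ^+ (m - i.+1).
  rewrite kap_recr; last by lia.
  rewrite alpE odd_double mulr1.
  by rewrite {1}(_ : m.*2 = i.*2.+2 + (m - i.+1).*2)%N ?kapE //; lia.
have Hm : (-1) ^+ m = (-1) ^+ (i.+1 + (m - i.+1)) :> rat by congr (_ ^+ _); lia.
rewrite !add1n add0n !betE /= odd_double /= !mul0r addr0 mul1r Hk Hm.
rewrite (_ : forall a b c d : rat, a * (b * c * d) = (a * c) * (b * d)); last by move=> *; ring.
rewrite sgnA; ring.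
Qed.

Lemma kapA1 i m : (i < m)%N -> kap wA i.*2.+3 m.*2.+1 = 2 ^+ (m - i.+1).
Proof.
by move=> Hi; rewrite (_ : m.*2.+1 = i.*2.+3 + (m - i.+1).*2)%N ?kapA //; lia.
Qed.

Lemma A_rec0 m : Tw wA m.*2 =
  2 ^+ m - \sum_(i < m) Tw wA i.*2.+1 * 2 ^+ (m - i.+1) * 'C(m.*2.+1, i.*2.+2)%:R.
Proof.
have H := T_rec wA m.*2.
rewrite (_ : m.*2.+1 = 1 + m.*2)%N // kapA sum_pair in H.
rewrite H; congr (_ + _); rewrite -sumrN; apply: eq_bigr => i _.
have Hi := ltn_ord i.
rewrite !add1n ?add0n !betA /= odd_double /= !mul0r add0r kapA1 //.
ring.
Qed.

Lemma A_rec1 m : Tw wA m.*2.+1 =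
  2 ^+ m - \sum_(i < m) Tw wA i.*2.+1 * 2 ^+ (m - i.+1) * 'C(m.*2.+2, i.*2.+2)%:R.
Proof.
have H := T_rec wA m.*2.+1.
rewrite kap_recr // alpA /= odd_double /= mulr1 in H.
rewrite (_ : m.*2.+1 = 1 + m.*2)%N // kapA in H.
rewrite big_nat_recr /= in H; last by lia.
rewrite betA /= odd_double /= !mul0r addr0 sum_pair in H.
rewrite H; congr (_ + _); rewrite -sumrN; apply: eq_bigr => i _.
have Hi := ltn_ord i.
rewrite !add1n ?add0n !betA /= odd_double /= !mul0r add0r.
rewrite kap_recr; last by lia.
rewrite alpA /= odd_double /= mulr1 kapA1 //.
ring.
Qed.

Section Poly.
Local Open Scope ring_scope.

Definition ec (p : {poly rat}) n := p`_n * (n`!)%:R.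

Lemma fact_neq0 n : ((n`!)%:R : rat) != 0.
Proof. by rewrite pnatr_eq0 -lt0n fact_gt0. Qed.

Lemma ecM p q n :
  ec (p * q) n = \sum_(k < n.+1) 'C(n, k)%:R * (ec p k * ec q (n - k)).
Proof.
rewrite /ec coefM mulr_suml; apply: eq_bigr => k _.
have Hk : (k <= n)%N by rewrite -ltnS.
rewrite -(bin_fact Hk) !natrM; ring.
Qed.

Lemma ecD p n : ec (p^`()) n = ec p n.+1.
Proof. by rewrite /ec coef_deriv factS natrM mulrA -[p`_n.+1 *+ n.+1]mulr_natr. Qed.

Lemma ecB p q n : ec (p - q) n = ec p n - ec q n.
Proof. by rewrite /ec coefB mulrBl. Qed.
Lemma ecAdd p q n : ec (p + q) n = ec p n + ec q n.
Proof. by rewrite /ec coefD mulrDl. Qed.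
Lemma ec1 n : ec 1 n = (n == 0)%N%:R.
Proof. by rewrite /ec coef1; case: n => [|n] //=; rewrite mul0r. Qed.

Definition P N (a : nat -> rat) : {poly rat} := \poly_(i < N) (a i / (i`!)%:R).
Lemma ecP N a n : (n < N)%N -> ec (P N a) n = a n.
Proof. by move=> H; rewrite /ec coef_poly H divfK ?fact_neq0. Qed.

Arguments ecP {N a n}.
Definition lz L (p : {poly rat}) := forall n, (n <= L)%N -> ec p n = 0.

Lemma lz_mul L p q : lz L p -> lz L (p * q).
Proof.
move=> H n Hn; rewrite ecM big1 // => k _.
by rewrite H ?mul0r ?mulr0 //; have := ltn_ord k; lia.
Qed.
Lemma lz_mulr L p q : lz L p -> lz L (q * p).
Proof. by rewrite mulrC; apply: lz_mul. Qed.
Lemma lz_add L p q : lz L p -> lz L q -> lz L (p + q).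
Proof. by move=> Hp Hq n Hn; rewrite ecAdd Hp ?Hq ?addr0. Qed.
Lemma lz_opp L p : lz L p -> lz L (- p).
Proof. by move=> Hp n Hn; rewrite -sub0r ecB Hp // /ec coef0 mul0r subr0. Qed.
Lemma lz_sub L p q : lz L p -> lz L q -> lz L (p - q).
Proof. by move=> Hp Hq; apply: lz_add => //; apply: lz_opp. Qed.
Lemma lz_deriv L p : lz L.+1 p -> lz L (p^`()).
Proof. by move=> H n Hn; rewrite ecD H. Qed.
Lemma lz_le L M p : lz L p -> (M <= L)%N -> lz M p.
Proof. by move=> H HM n Hn; apply: H; lia. Qed.
Lemma lz_int L p : lz L (p^`()) -> ec p 0 = 0 -> lz L.+1 p.
Proof. by move=> H H0 [|n] Hn //; rewrite -ecD H. Qed.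
Lemma lz_eq L p q : lz L (p - q) -> forall n, (n <= L)%N -> ec p n = ec q n.
Proof. by move=> H n Hn; apply/eqP; rewrite -subr_eq0 -ecB H. Qed.

Arguments lz_mul {L p q}. Arguments lz_mulr {L p q}. Arguments lz_add {L p q}.
Arguments lz_opp {L p}. Arguments lz_sub {L p q}. Arguments lz_deriv {L p}.
Arguments lz_le {L M p}. Arguments lz_int {L p}. Arguments lz_eq {L p q}.

Lemma sum_ord_pair (F : nat -> rat) m :
  \sum_(k < m.*2) F k = \sum_(i < m) (F i.*2 + F i.*2.+1).
Proof.
elim: m => [|m IH]; first by rewrite !big_ord0.
by rewrite doubleS !big_ord_recr /= IH addrA.
Qed.

Definition chs n : rat := (~~ odd n)%:R.
Definition shs n : rat := (odd n)%:R.

Variable x : nat -> rat.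
Hypothesis x0 : x 0 = 1.
Hypothesis Hx : forall m, \sum_(i < m.+1) 'C(m.*2.+1, i.*2.+1)%:R * x i = 1.
Definition Xs n : rat := if odd n then x n./2 else 0.

Variable L : nat.
Let c := P L.+3 chs.
Let s := P L.+3 shs.
Let X := P L.+3 Xs.

Lemma F1 : lz L.+1 (c^`() - s).
Proof.
move=> n Hn; rewrite ecB ecD !ecP; try lia.
by rewrite /chs /shs /= negbK subrr.
Qed.
Lemma F2 : lz L.+1 (s^`() - c).
Proof.
move=> n Hn; rewrite ecB ecD !ecP; try lia.
by rewrite /chs /shs /= subrr.
Qed.

Lemma F3 : lz L.+1 (X * c - s).
Proof.
move=> n Hn; rewrite ecB ecM ecP; last by lia.
apply/eqP; rewrite subr_eq0; apply/eqP.
rewrite (eq_bigr (fun k : 'I_n.+1 => 'C(n, k)%:R * (Xs k * chs (n - k)))); last first.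
  by move=> k _; rewrite !ecP //; have := ltn_ord k; lia.
case/boolP: (odd n) => On.
  have [m Hm] : exists m, n = m.*2.+1.
    by exists n./2; rewrite -[n in LHS]odd_double_half On add1n.
  subst n.
  rewrite /shs On.
  transitivity (\sum_(i < m.+1) 'C(m.*2.+1, i.*2.+1)%:R * x i); last exact: Hx m.
  rewrite (_ : m.*2.+2 = m.+1.*2)%N //.
  rewrite (sum_ord_pair (fun k => 'C(m.*2.+1, k)%:R * (Xs k * chs (m.*2.+1 - k)))).
  apply: eq_bigr => i _.
  rewrite /Xs /= odd_double /= uphalf_double mul0r mulr0 add0r.
  by rewrite /chs subSS -doubleB odd_double /= mulr1.
have [m Hm] : exists m, n = m.*2.
  by exists n./2; rewrite -[n in LHS]odd_double_half (negbTE On) add0n.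
subst n.
rewrite /shs odd_double big1 // => k _.
rewrite /Xs /chs; case Ok: (odd k) => //=; last by rewrite !mul0r mulr0.
have Hk := ltn_ord k.
by rewrite oddB ?odd_double ?Ok ?mulr0 //; lia.
Qed.

Definition K := c * c - s * s - 1.

Lemma FK : lz L.+2 K.
Proof.
apply: lz_int.
  have -> : K^`() = 2%:R * c * (c^`() - s) - 2%:R * s * (s^`() - c).
    rewrite /K !derivB !derivM -polyC1 derivC; ring.
  by apply: lz_sub; apply: lz_mulr; [exact: F1|exact: F2].
rewrite /K !ecB !ecM !big_ord1 /= !ecP // ec1 /chs /shs /=.
by rewrite bin0; ring.
Qed.

Lemma ecMn p k n : ec (p *+ k) n = ec p n *+ k.
Proof. by rewrite /ec coefMn mulrnAl. Qed.

Definition G := X^`() * c + X * s - c.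
Lemma FG : lz L G.
Proof.
have -> : G = (X * c - s)^`() - X * (c^`() - s) + (s^`() - c).
  rewrite /G derivB derivM; ring.
apply: lz_add; last (apply: (lz_le F2); lia).
apply: lz_sub; first by apply: lz_deriv; exact: F3.
apply: lz_mulr; (apply: (lz_le F1); lia).
Qed.

Lemma I1p : lz L (X^`() * (s * c) - X).
Proof.
have -> : X^`() * (s * c) - X = s * G - c * (X * c - s) + X * K.
  rewrite /G /K; ring.
apply: lz_add; last by apply: lz_mulr; apply: (lz_le FK); lia.
apply: lz_sub; apply: lz_mulr; [exact: FG | (apply: (lz_le F3); lia)].
Qed.

Lemma I2p : lz L (X^`() * (s * s) + X^`() - 1).
Proof.
have -> : X^`() * (s * s) + X^`() - 1 = c * G - s * (X * c - s) + K - X^`() * K.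
  rewrite /G /K; ring.
apply: lz_sub; last by apply: lz_mulr; apply: (lz_le FK); lia.
apply: lz_add; last (apply: (lz_le FK); lia).
apply: lz_sub; apply: lz_mulr; [exact: FG | (apply: (lz_le F3); lia)].
Qed.

Definition uu n := ec (s * c) n.
Definition vv n := ec (c * c + s * s) n.

Lemma uuS n : (n <= L.+1)%N -> uu n.+1 = vv n.
Proof.
move=> Hn; rewrite /uu /vv -ecD; apply: (lz_eq _ _ Hn).
have -> : (s * c)^`() - (c * c + s * s) = (s^`() - c) * c + s * (c^`() - s).
  rewrite derivM; ring.
apply: lz_add; [apply: lz_mul; exact: F2 | apply: lz_mulr; exact: F1].
Qed.

Lemma vvS n : (n <= L.+1)%N -> vv n.+1 = uu n *+ 4.
Proof.
move=> Hn; rewrite /vv /uu -ecD -ecMn; apply: (lz_eq _ _ Hn).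
have -> : (c * c + s * s)^`() - (s * c) *+ 4 =
    2%:R * c * (c^`() - s) + 2%:R * s * (s^`() - c).
  rewrite derivD !derivM; ring.
apply: lz_add; apply: lz_mulr; [exact: F1 | exact: F2].
Qed.

Lemma uv_closed n : (n <= L.+2)%N ->
  uu n = (if odd n then 4 ^+ n./2 else 0) /\ vv n = (if odd n then 0 else 4 ^+ n./2).
Proof.
elim: n => [|n IH] Hn.
  rewrite /uu /vv ecAdd !ecM !big_ord1 /= !ecP // /chs /shs /=.
have [Hu Hv] := IH (ltnW Hn).
rewrite uuS ?vvS; try lia.
rewrite Hu Hv /= uphalf_half.
by case: (odd n) => /=; split; rewrite ?add0n ?add1n ?exprS ?mul0rn //; ring.
Qed.

Lemma ss_closed n : (n <= L.+2)%N ->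
  ec (s * s) n *+ 2 = vv n - (n == 0)%N%:R.
Proof.
move=> Hn; rewrite -ecMn -ec1 (_ : (s * s) *+ 2 = (c * c + s * s) - 1 - K).
  by rewrite ecB FK // subr0 ecB.
by rewrite /K; ring.
Qed.

Arguments uv_closed {n}. Arguments ss_closed {n}.
Lemma uu_odd k : (k.*2.+1 <= L.+2)%N -> uu k.*2.+1 = 4 ^+ k.
Proof.
move=> H; have [-> _] := uv_closed H.
by rewrite /= odd_double /= uphalf_double.
Qed.

Lemma ss_even k : (k.+1.*2 <= L.+2)%N -> ec (s * s) k.+1.*2 = 2 * 4 ^+ k.
Proof.
move=> H; have := ss_closed H; have [_ ->] := uv_closed H.
rewrite odd_double /= doubleK mulr2n exprS => E; lra.
Qed.

Lemma ss_0 : ec (s * s) 0 = 0.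
Proof.
have := ss_closed (leq0n _); have [_ ->] := uv_closed (leq0n _).
by rewrite /= mulr2n expr0 => E; lra.
Qed.

Lemma Xs_odd k : Xs k.*2.+1 = x k.
Proof. by rewrite /Xs /= odd_double /= uphalf_double. Qed.
Lemma Xs_even k : Xs k.*2 = 0.
Proof. by rewrite /Xs odd_double. Qed.

Lemma Xs_even2 k : Xs k.*2.+2 = 0.
Proof. by rewrite /Xs /= odd_double. Qed.

Lemma I1 m : (m.*2.+1 <= L)%N ->
  x m = 4 ^+ m + \sum_(i < m) x i.+1 * 4 ^+ (m - i.+1) * 'C(m.*2.+1, i.*2.+2)%:R.
Proof.
move=> Hm.
have E := lz_eq I1p _ Hm.
rewrite (ecP (_ : m.*2.+1 < L.+3)%N) in E; last by lia.
rewrite Xs_odd in E.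
rewrite -E ecM.
rewrite (eq_bigr (fun k : 'I_(m.*2.+2) => 'C(m.*2.+1, k)%:R * (Xs k.+1 * uu (m.*2.+1 - k))));
  last by move=> k _; rewrite ecD ecP //; have := ltn_ord k; lia.
rewrite (_ : m.*2.+2 = m.+1.*2)%N //.
rewrite (sum_ord_pair (fun k => 'C(m.*2.+1, k)%:R * (Xs k.+1 * uu (m.*2.+1 - k)))).
rewrite big_ord_recl /= double0 (Xs_odd 0) x0 subn0 uu_odd; last by lia.
rewrite (Xs_even2 0) bin0 !mul0r mulr0 addr0 !mul1r.
congr (_ + _); apply: eq_bigr => i _.
have Hi := ltn_ord i.
rewrite /bump leq0n add1n Xs_even2 !mul0r mulr0 addr0 Xs_odd.
rewrite (_ : (m.*2.+1 - i.+1.*2 = (m - i.+1).*2.+1)%N); last by rewrite doubleS; lia.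
rewrite uu_odd; last by lia.
by rewrite doubleS; ring.
Qed.

Lemma I2 m : (m.*2.+2 <= L)%N ->
  - x m.+1 = 2 * 4 ^+ m +
    \sum_(i < m) x i.+1 * (2 * 4 ^+ (m - i.+1)) * 'C(m.*2.+2, i.*2.+2)%:R.
Proof.
move=> Hm.
have E := I2p _ Hm.
rewrite ecB ecAdd ec1 ecD (ecP (_ : m.*2.+3 < L.+3)%N) in E; last by lia.
rewrite -[m.*2.+3]/(m.+1.*2.+1) Xs_odd /= subr0 in E.
have E2 : ec (X^`() * (s * s)) m.*2.+2 = - x m.+1 by apply/eqP; rewrite -addr_eq0 E.
rewrite -E2 ecM big_ord_recr /= subnn ss_0 mulr0 mulr0 addr0.
rewrite (eq_bigr (fun k : 'I_(m.*2.+2) => 'C(m.*2.+2, k)%:R * (Xs k.+1 * ec (s * s) (m.*2.+2 - k))));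
  last by move=> k _; rewrite ecD ecP //; have := ltn_ord k; lia.
rewrite (_ : m.*2.+2 = m.+1.*2)%N //.
rewrite (sum_ord_pair (fun k => 'C(m.+1.*2, k)%:R * (Xs k.+1 * ec (s * s) (m.+1.*2 - k)))).
rewrite big_ord_recl /= double0 (Xs_odd 0) x0 subn0 ss_even; last by lia.
rewrite (Xs_even2 0) bin0 !mul0r mulr0 addr0 !mul1r.
congr (_ + _); apply: eq_bigr => i _.
have Hi := ltn_ord i.
rewrite /bump leq0n add1n Xs_even2 !mul0r mulr0 addr0 Xs_odd.
rewrite (_ : (m.+1.*2 - i.+1.*2 = (m - i.+1).+1.*2)%N); last by rewrite !doubleS; lia.
rewrite ss_even; last by lia.
by rewrite !doubleS; ring.
Qed.
End Poly.

Definition xe i : rat := (-1) ^+ i * Tw wE i.*2.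

Lemma xe0 : xe 0 = 1.
Proof. by rewrite /xe /Tw big_ord1 /= mul1r. Qed.

Lemma four : (4 : rat) = 2 ^+ 2.
Proof. by rewrite expr2. Qed.

Lemma pow_split m i : (i < m)%N ->
  (2 : rat) ^+ m * 2 ^+ (m - i.+1) = 2 ^+ i.+1 * 4 ^+ (m - i.+1).
Proof.
move=> H; rewrite four -exprM -!exprD; congr (_ ^+ _); lia.
Qed.

Lemma claim m : 2 ^+ m * Tw wA m.*2 = xe m /\ 2 ^+ m.+1 * Tw wA m.*2.+1 = - xe m.+1.
Proof.
elim: m {-2}m (leqnn m) => [|M IH] m Hm.
  have -> : m = 0%N by lia.
  split.
    by rewrite A_rec0 big_ord0 subr0 xe0 expr0 mul1r.
  have := @I2 xe xe0 E_rec 2 0 erefl.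
  by rewrite A_rec1 big_ord0 big_ord0 subr0 !expr0 => ->; rewrite subr0; ring.
have IHi : forall i, (i < m)%N -> 2 ^+ i.+1 * Tw wA i.*2.+1 = - xe i.+1.
  by move=> i Hi; case: (IH i) => //; lia.
split.
  rewrite A_rec0 (@I1 xe xe0 E_rec m.*2.+2 m) //.
  rewrite mulrBr -expr2 -exprM mulnC exprM -four mulr_sumr; congr (_ + _).
  rewrite -sumrN; apply: eq_bigr => i _.
  have Hi := ltn_ord i.
  rewrite -[xe i.+1]opprK -IHi //.
  rewrite (_ : forall a b t c : rat, -(a * (t * b * c)) = - (a * b) * t * c); last by move=> *; ring.
  rewrite pow_split //; ring.
rewrite A_rec1 (@I2 xe xe0 E_rec m.*2.+2 m) //.
rewrite mulrBr exprS -mulrA -expr2 -exprM mulnC exprM -four.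
rewrite mulr_sumr; congr (_ + _).
rewrite -sumrN; apply: eq_bigr => i _.
have Hi := ltn_ord i.
rewrite -[xe i.+1]opprK -IHi //.
rewrite (_ : forall a b t c : rat, -(2 * a * (t * b * c)) = - (2 * (a * b)) * t * c); last by move=> *; ring.
rewrite pow_split //; ring.
Qed.

Theorem lemma3p4 (m : nat) :
  Apq (2 * m + 1)%N (0 : rat) (-1) = (-1) ^+ m * (Euler (2 * m + 1))%:R / 2 ^+ m /\
  Apq (2 * m + 2)%N (0 : rat) (-1) = (-1) ^+ m * (Euler (2 * m + 3))%:R / 2 ^+ m.+1.
Proof.
have [C1 C2] := claim m.
have n2 : forall k, (2 : rat) ^+ k != 0 by move=> k; rewrite expf_neq0.
split.
  rewrite addn1 mul2n Apq_T Euler_T.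
  apply: (mulfI (n2 m)); rewrite C1 mulrC divfK //.
rewrite (_ : (2 * m + 2 = (m.*2.+1).+1)%N); last by rewrite mul2n; lia.
rewrite (_ : (2 * m + 3 = (m.+1.*2).+1)%N); last by rewrite mul2n doubleS; lia.
rewrite Apq_T Euler_T.
apply: (mulfI (n2 m.+1)); rewrite C2 mulrC divfK // /xe exprS; ring.
Qed.
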